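(* The category $\mathsf{HSLat}$ does not satisfy normality of unions: there exist a Heyting semilattice $A$ and sub-Heyting semilattices $X\le B\le A$, $X\le C\le A$ such that $X$ is a normal subobject of $B$ and of $C$, but $X$ is not a normal subobject of the join $B\vee C$ in $A$. (For instance $A=C_4\times C_4$ with $C_4=\{0<1<2<3\}$, $X=\{(2,2),(3,3)\}$, $B=\{(0,1),(2,2),(3,3)\}$, $C=\{(1,0),(2,2),(3,3)\}$.) Consequently, normalisers do not exist in general in $\mathsf{HSLat}$.
   Context: A Heyting semilattice is a meet-semilattice with top $1$ and an operation $\Rightarrow$ with $x\wedge y\le z$ iff $x\le y\Rightarrow z$; morphisms preserve $1,\wedge,\Rightarrow$. A finite chain is a Heyting semilattice, and products are computed componentwise. A normal subobject is a kernel; in $\mathsf{HSLat}$ the normal subobjects of $A$ are exactly the filters of $A$ (non-empty, closed under $\wedge$, up-closed). A semi-abelian category satisfies normality of unions if, whenever $X\le B\le A$ and $X\le C\le A$ are subobjects with $X$ normal in both $B$ and $C$, then $X$ is normal in the join $B\vee C$ of subobjects of $A$. The normaliser of a subobject $X\le A$ is the largest subobject of $A$ in which $X$ is normal. *)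

(* Defs.v *)
(* A Heyting semilattice: a meet-semilattice with top 1 (presented
   algebraically: meet associative, commutative, idempotent, with unit top)
   together with an implication satisfying  x /\ y <= z  iff  x <= y => z,
   where  a <= b  means  a /\ b = a. *)
Record HSLat := {
  car :> Type;
  htop : car;
  hmeet : car -> car -> car;
  himp : car -> car -> car;
  hmeet_assoc : forall x y z, hmeet x (hmeet y z) = hmeet (hmeet x y) z;
  hmeet_comm : forall x y, hmeet x y = hmeet y x;
  hmeet_idem : forall x, hmeet x x = x;
  hmeet_top : forall x, hmeet x htop = x;
  himp_adj : forall x y z,
      hmeet (hmeet x y) z = hmeet x y <-> hmeet x (himp y z) = x
}.

Definition hle (A : HSLat) (x y : A) : Prop := hmeet A x y = x.

Definition subset {T : Type} (P Q : T -> Prop) : Prop := forall x, P x -> Q x.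

Definition is_subalg (A : HSLat) (S : A -> Prop) : Prop :=
  S (htop A) /\
  (forall x y, S x -> S y -> S (hmeet A x y)) /\
  (forall x y, S x -> S y -> S (himp A x y)).

(* X is normal in B (X <= B) iff X is a filter of B:
   non-empty, closed under meets, up-closed in B. *)
Definition normal_in (A : HSLat) (X B : A -> Prop) : Prop :=
  subset X B /\
  (exists x, X x) /\
  (forall x y, X x -> X y -> X (hmeet A x y)) /\
  (forall x y, X x -> B y -> hle A x y -> X y).

Definition join_sub (A : HSLat) (B C : A -> Prop) : A -> Prop :=
  fun a => forall S : A -> Prop, is_subalg A S -> subset B S -> subset C S -> S a.

Definition is_normaliser (A : HSLat) (X N : A -> Prop) : Prop :=
  is_subalg A N /\ normal_in A X N /\
  (forall M : A -> Prop, is_subalg A M -> normal_in A X M -> subset M N).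

(* Main.v *)
Require Import Defs.

Inductive c4 := c0 | c1 | c2 | c3.

Definition cmin (x y : c4) : c4 :=
  match x, y with
  | c0, _ | _, c0 => c0
  | c1, _ | _, c1 => c1
  | c2, _ | _, c2 => c2
  | c3, c3 => c3
  end.

Definition cle (x y : c4) : bool :=
  match x, y with
  | c0, _ => true
  | c1, c0 => false | c1, _ => true
  | c2, (c2 | c3) => true | c2, _ => false
  | c3, c3 => true | c3, _ => false
  end.

Definition cimp (x y : c4) : c4 := if cle x y then c3 else y.

Lemma cadj : forall x y z, cmin (cmin x y) z = cmin x y <-> cmin x (cimp y z) = x.
Proof. intros [] [] []; simpl; split; intro H; try reflexivity; discriminate. Qed.

Definition pmeet (p q : c4 * c4) := (cmin (fst p) (fst q), cmin (snd p) (snd q)).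
Definition pimp (p q : c4 * c4) := (cimp (fst p) (fst q), cimp (snd p) (snd q)).

Lemma pair_eq {A B : Type} (a c : A) (b d : B) : (a, b) = (c, d) <-> a = c /\ b = d.
Proof. split; [intro H; inversion H; auto | intros [-> ->]; auto]. Qed.

Definition A4 : HSLat.
Proof.
  refine {| car := c4 * c4; htop := (c3, c3); hmeet := pmeet; himp := pimp |}.
  - intros [a b] [c d] [e f]; unfold pmeet; simpl;
      destruct a, b, c, d, e, f; reflexivity.
  - intros [a b] [c d]; unfold pmeet; simpl; destruct a, b, c, d; reflexivity.
  - intros [a b]; unfold pmeet; simpl; destruct a, b; reflexivity.
  - intros [a b]; unfold pmeet; simpl; destruct a, b; reflexivity.
  - intros [a b] [c d] [e f]; unfold pmeet, pimp; simpl.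
    pose proof (cadj a c e) as H1; pose proof (cadj b d f) as H2.
    destruct H1 as [H1a H1b]; destruct H2 as [H2a H2b].
    split; intro H; injection H; intros; f_equal; auto.
Defined.

Definition X : A4 -> Prop := fun p => p = (c2, c2) \/ p = (c3, c3).
Definition B : A4 -> Prop := fun p => p = (c0, c1) \/ p = (c2, c2) \/ p = (c3, c3).
Definition C : A4 -> Prop := fun p => p = (c1, c0) \/ p = (c2, c2) \/ p = (c3, c3).

Lemma X_sub : is_subalg A4 X.
Proof.
  unfold is_subalg, X; split; [right; reflexivity|split];
  intros x y [->| ->] [->| ->]; simpl; auto.
Qed.

Lemma B_sub : is_subalg A4 B.
Proof.
  unfold is_subalg, B; split; [right; right; reflexivity|split];
  intros x y [->|[->| ->]] [->|[->| ->]]; simpl; auto.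
Qed.

Lemma C_sub : is_subalg A4 C.
Proof.
  unfold is_subalg, C; split; [right; right; reflexivity|split];
  intros x y [->|[->| ->]] [->|[->| ->]]; simpl; auto.
Qed.

Lemma XB : normal_in A4 X B.
Proof.
  unfold normal_in, X, B, subset, hle; split; [intros x [->| ->]; auto|split].
  - exists (c3, c3); auto.
  - split; [intros x y [->| ->] [->| ->]; simpl; auto|].
    intros x y [->| ->] [->|[->| ->]]; simpl; intro H; try discriminate; auto.
Qed.

Lemma XC : normal_in A4 X C.
Proof.
  unfold normal_in, X, C, subset, hle; split; [intros x [->| ->]; auto|split].
  - exists (c3, c3); auto.
  - split; [intros x y [->| ->] [->| ->]; simpl; auto|].
    intros x y [->| ->] [->|[->| ->]]; simpl; intro H; try discriminate; auto.
Qed.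

Lemma in_S (S : A4 -> Prop) : is_subalg A4 S -> subset B S -> subset C S -> S (c3, c2).
Proof.
  intros [_ [_ Himp]] HB HC.
  assert (h01 : S (c0, c1)) by (apply HB; left; reflexivity).
  assert (h10 : S (c1, c0)) by (apply HC; left; reflexivity).
  assert (h22 : S (c2, c2)) by (apply HB; right; left; reflexivity).
  pose proof (Himp _ _ h10 h01) as h03.
  exact (Himp _ _ h03 h22).
Qed.

Lemma not_norm (S : A4 -> Prop) : is_subalg A4 S -> subset B S -> subset C S ->
  ~ normal_in A4 X S.
Proof.
  intros HS HB HC [_ [_ [_ Hup]]].
  assert (H : X (c3, c2)).
  { apply (Hup (c2, c2)); [left; reflexivity | apply in_S; auto | reflexivity]. }
  destruct H as [H|H]; discriminate.
Qed.

Theorem mainTheorem5 :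
  (exists (A : HSLat) (X B C : A -> Prop),
      is_subalg A X /\ is_subalg A B /\ is_subalg A C /\
      subset X B /\ subset X C /\
      normal_in A X B /\ normal_in A X C /\
      ~ normal_in A X (join_sub A B C)) /\
  (exists (A : HSLat) (X : A -> Prop),
      is_subalg A X /\ ~ (exists N : A -> Prop, is_normaliser A X N)).
Proof.
  split.
  - exists A4, X, B, C.
    repeat split; try apply X_sub; try apply B_sub; try apply C_sub;
      try (apply XB); try (apply XC);
      try (intros x [->| ->]; unfold B, C; auto).
    intros [_ [_ [_ Hup]]].
    assert (H : X (c3, c2)).
    { apply (Hup (c2, c2)); [left; reflexivity | | reflexivity].
      intros S HS HB HC; apply in_S; auto. }
    destruct H as [H|H]; discriminate.
  - exists A4, X. split; [apply X_sub|].
    intros [N [HN [HXN Hmax]]].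
    apply (not_norm N HN); auto.
    + apply Hmax; [apply B_sub | apply XB].
    + apply Hmax; [apply C_sub | apply XC].
Qed.
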